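(* Let $U_0>0$, $\omega_f\in\mathbb{R}$ and $h$ the Heaviside function. Consider $v_x'(x,y,z,t) = h(t)\int_0^t \sin[x+y+z-U_0(t-\tau)]\sin\omega_f\tau\,d\tau$, $v_y' = 0$, $v_z'(x,y,z,t) = -h(t)\int_0^t\sin[x+y+z-U_0(t-\tau)]\sin\omega_f\tau\,d\tau$, $p'=0$ (the pointwise solution of the forced linearized Euler system given by Duhamel's formula with $f_1=f_2=f_3=0$, $f_4(\xi)=\sin\xi$, $k_4=l_4=m_4=1$). Then there is no function $\Phi(x,y,z,t)$ with $v_x' = \partial\Phi/\partial x$, $v_y' = \partial\Phi/\partial y$, $v_z' = \partial\Phi/\partial z$, i.e. no velocity potential exists for this solution.
   Context: The forced linearized Euler system is $\partial_t v_x' + U_0\partial_x v_x' + \frac1{\rho_0}\partial_x p' = h(t)F\sin\omega_f t$, $\partial_t v_y' + U_0\partial_x v_y' + \frac1{\rho_0}\partial_y p' = h(t)G\sin\omega_f t$, $\partial_t v_z' + U_0\partial_x v_z' + \frac1{\rho_0}\partial_z p' = h(t)H\sin\omega_f t$, $\partial_t p' + U_0\partial_xp' + \rho_0c_0^2(\partial_xv_x'+\partial_yv_y'+\partial_zv_z') = h(t)P\sin\omega_f t$; here $F = \sin(x+y+z)$, $G=0$, $H=-\sin(x+y+z)$, $P=0$. *)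

(* Defs.v *)
From Stdlib Require Import Reals.
From Coquelicot Require Import Coquelicot.
Open Scope R_scope.

(* Heaviside function (value at 0 is immaterial here: the integral over [0,0] is 0). *)
Definition heaviside (t : R) : R := if Rle_dec 0 t then 1 else 0.

Definition duhamel_int (U0 omega_f x y z t : R) : R :=
  RInt (fun tau => sin (x + y + z - U0 * (t - tau)) * sin (omega_f * tau)) 0 t.

Definition vx' (U0 omega_f x y z t : R) : R :=
  heaviside t * duhamel_int U0 omega_f x y z t.
Definition vy' (U0 omega_f x y z t : R) : R := 0.
Definition vz' (U0 omega_f x y z t : R) : R :=
  - (heaviside t * duhamel_int U0 omega_f x y z t).
Definition p' (U0 omega_f x y z t : R) : R := 0.

(* Main.v *)
Require Import Defs.
From Stdlib Require Import Reals Lra.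
From Coquelicot Require Import Coquelicot.
Open Scope R_scope.

Lemma cont_integrand (U0 w t : R) (x : R) :
  continuous (fun tau => cos (U0 * (t - tau)) * sin (w * tau)) x.
Proof.
  apply (ex_derive_continuous (V:=R_NormedModule)). auto_derive. auto.
Qed.

Lemma I_pos (U0 w t : R) : 0 < U0 -> 0 < w -> 0 < t -> U0 * t < 1 -> w * t < 1 ->
  0 < RInt (fun tau => cos (U0 * (t - tau)) * sin (w * tau)) 0 t.
Proof.
  intros hU hw ht h1 h2.
  apply RInt_gt_0; [lra| |intros; apply cont_integrand].
  intros x [hx1 hx2].
  assert (PI2_1' := PI2_1).
  apply Rmult_lt_0_compat.
  - apply cos_gt_0; nra.
  - apply sin_gt_0; nra.
Qed.

Lemma I_neq0 (U0 w t : R) : 0 < U0 -> w <> 0 -> 0 < t -> U0 * t < 1 -> Rabs w * t < 1 ->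
  RInt (fun tau => cos (U0 * (t - tau)) * sin (w * tau)) 0 t <> 0.
Proof.
  intros hU hw ht h1 h2.
  destruct (Rlt_or_le 0 w) as [hp|hn].
  - rewrite Rabs_pos_eq in h2 by lra.
    pose proof (I_pos U0 w t hU hp ht h1 h2). lra.
  - rewrite Rabs_left1 in h2 by lra.
    assert (hp : 0 < - w) by lra.
    pose proof (I_pos U0 (- w) t hU hp ht h1 h2).
    rewrite (RInt_ext _ (fun tau => opp (cos (U0 * (t - tau)) * sin (- w * tau)))).
    + rewrite (RInt_opp (V:=R_CompleteNormedModule)).
      * unfold opp; simpl. intro; lra.
      * apply ex_RInt_continuous; intros; apply cont_integrand.
    + intros x _. unfold opp; simpl.
      replace (- w * x) with (- (w * x)) by ring. rewrite sin_neg. ring.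
Qed.

Theorem proposition8 (U0 omega_f : R) (hU0 : 0 < U0) (homega : omega_f <> 0) :
  ~ exists Phi : R -> R -> R -> R -> R,
      forall x y z t : R,
        is_derive (fun a => Phi a y z t) x (vx' U0 omega_f x y z t) /\
        is_derive (fun b => Phi x b z t) y (vy' U0 omega_f x y z t) /\
        is_derive (fun c => Phi x y c t) z (vz' U0 omega_f x y z t).
Proof.
  intros [Phi H].
  set (t0 := / (U0 + Rabs omega_f)).
  assert (ha : 0 < Rabs omega_f) by (apply Rabs_pos_lt; auto).
  assert (ht0 : 0 < t0) by (unfold t0; apply Rinv_0_lt_compat; lra).
  assert (hsum : (U0 + Rabs omega_f) * t0 = 1) by (unfold t0; field; lra).
  assert (h1 : U0 * t0 < 1) by nra.
  assert (h2 : Rabs omega_f * t0 < 1) by nra.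
  pose proof (I_neq0 U0 omega_f t0 hU0 homega ht0 h1 h2) as HI.
  set (I := RInt (fun tau => cos (U0 * (t0 - tau)) * sin (omega_f * tau)) 0 t0) in HI.
  assert (Hc : forall x, Phi x PI 0 t0 = Phi x 0 0 t0).
  { intro x.
    destruct (MVT_gen (fun b => Phi x b 0 t0) 0 PI (fun _ => 0)) as [c [_ Hc]].
    - intros b _. apply (proj1 (proj2 (H x b 0 t0))).
    - intros b _. apply continuity_pt_filterlim.
      apply (ex_derive_continuous (V:=R_NormedModule) (fun b => Phi x b 0 t0)). eexists. apply (proj1 (proj2 (H x b 0 t0))).
    - lra. }
  assert (E1 : is_derive (fun a => Phi a 0 0 t0) (- (PI/2))
                 (vx' U0 omega_f (- (PI/2)) PI 0 t0)).
  { eapply is_derive_ext; [|apply (proj1 (H (- (PI/2)) PI 0 t0))]. intro; apply Hc. }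
  pose proof (proj1 (H (- (PI/2)) 0 0 t0)) as E2.
  apply is_derive_unique in E1. apply is_derive_unique in E2.
  rewrite E1 in E2.
  unfold vx', heaviside, duhamel_int in E2.
  destruct (Rle_dec 0 t0); [|lra].
  rewrite !Rmult_1_l in E2.
  assert (L : RInt (fun tau => sin (- (PI / 2) + PI + 0 - U0 * (t0 - tau)) * sin (omega_f * tau)) 0 t0 = I).
  { apply RInt_ext. intros x _. replace (- (PI / 2) + PI + 0 - U0 * (t0 - x)) with
        (PI/2 - U0 * (t0 - x)) by lra. rewrite sin_minus, sin_PI2, cos_PI2.
    rewrite Rmult_1_l, Rmult_0_l, Rminus_0_r; reflexivity. }
  assert (Rr : RInt (fun tau => sin (- (PI / 2) + 0 + 0 - U0 * (t0 - tau)) * sin (omega_f * tau)) 0 t0 = - I).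
  { rewrite (RInt_ext _ (fun tau => opp (cos (U0 * (t0 - tau)) * sin (omega_f * tau)))).
    - rewrite (RInt_opp (V:=R_CompleteNormedModule)).
      + reflexivity.
      + apply ex_RInt_continuous; intros; apply cont_integrand.
    - intros x _. unfold opp; simpl. replace (- (PI / 2) + 0 + 0 - U0 * (t0 - x)) with
        (- (PI/2 + U0 * (t0 - x))) by lra. rewrite sin_neg, sin_plus, sin_PI2, cos_PI2.
      rewrite Rmult_1_l, Rmult_0_l, Rplus_0_r, Ropp_mult_distr_l; reflexivity. }
  rewrite L, Rr in E2.
  apply HI. lra.
Qed.
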